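(* Let $s\geq 2$ and suppose $G_{(s,0)}$ acts faithfully and transitively on a set of $n$ points, and that the translation subgroup $T=\langle u,v\rangle$ has exactly $m=3$ orbits, each of size $k$ (so $n=3k$). Then $k=ds$ for some positive divisor $d$ of $s$.
   Context: $G_{(s,0)}$ is the group of the toroidal hypermap $(3,3,3)_{(s,0)}$: the Coxeter group $[3,3,3]=\langle\rho_0,\rho_1,\rho_2\mid \rho_i^2=1,\ (\rho_i\rho_j)^3=1\ (i\neq j)\rangle$ factored by $(\rho_0\rho_1\rho_2\rho_1)^s$. Here $u=\rho_0\rho_1\rho_2\rho_1$ and $v=\rho_1 u\rho_1=\rho_1\rho_0\rho_1\rho_2$; $T=\langle u,v\rangle$ is a normal abelian subgroup of order $s^2$, so its orbits are blocks of equal size. *)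

(* Defs.v *)
From mathcomp Require Import all_boot all_fingroup.
Set Implicit Arguments. Unset Strict Implicit. Unset Printing Implicit Defensive.
Local Open Scope group_scope.

Definition isog_G_s0 (gT : finGroupType) (G : {set gT}) (s : nat) : Prop :=
  G \isog Grp (x0 : x1 : x2 :
    (x0 ^+ 2 = 1, x1 ^+ 2 = 1, x2 ^+ 2 = 1,
     (x0 * x1) ^+ 3 = 1, (x0 * x2) ^+ 3 = 1, (x1 * x2) ^+ 3 = 1,
     (x0 * x1 * x2 * x1) ^+ s = 1)).

(* A permutation representation of G_(s,0) on 'I_n: images r0 r1 r2 of the
   generators rho0 rho1 rho2 satisfying the defining relations (so that
   rho_i |-> r_i extends to a homomorphism G_(s,0) -> Sym(n)), and such that
   the action is faithful, i.e. the homomorphism is injective, i.e. the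
   permutation group generated is isomorphic to G_(s,0). *)
Definition faithful_G_s0_action (s n : nat) (r0 r1 r2 : {perm 'I_n}) : Prop :=
  [/\ [/\ r0 ^+ 2 = 1, r1 ^+ 2 = 1 & r2 ^+ 2 = 1],
      [/\ (r0 * r1) ^+ 3 = 1, (r0 * r2) ^+ 3 = 1 & (r1 * r2) ^+ 3 = 1],
      (r0 * r1 * r2 * r1) ^+ s = 1
    & isog_G_s0 <<[set r0; r1; r2]>> s].

Definition transl_u n (r0 r1 r2 : {perm 'I_n}) := r0 * r1 * r2 * r1.
Definition transl_v n (r0 r1 r2 : {perm 'I_n}) := r1 * transl_u r0 r1 r2 * r1.
Definition transl_T n (r0 r1 r2 : {perm 'I_n}) : {set {perm 'I_n}} :=
  <<[set transl_u r0 r1 r2; transl_v r0 r1 r2]>>.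

(* Main.v *)
Require Import Defs.
From mathcomp Require Import all_boot all_fingroup.
From mathcomp Require Import all_solvable all_algebra ring.
From Stdlib Require Import Lia.
From mathcomp Require Import zify.
Set Implicit Arguments. Unset Strict Implicit. Unset Printing Implicit Defensive.
Import GRing.Theory.
Local Open Scope group_scope.
Section Abs.
Variables (gT : finGroupType) (a b c : gT).
Hypotheses (Ha : a ^+ 2 = 1) (Hb : b ^+ 2 = 1) (Hc : c ^+ 2 = 1).
Hypotheses (Hab : (a * b) ^+ 3 = 1) (Hac : (a * c) ^+ 3 = 1) (Hbc : (b * c) ^+ 3 = 1).

Lemma sq_inv (x : gT) : x ^+ 2 = 1 -> x^-1 = x.
Proof. by move=> h; rewrite -[x^-1]mulg1 -h expgS expg1 mulgA mulVg mul1g. Qed.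
Lemma sq_cancel (x : gT) : x ^+ 2 = 1 -> forall t, x * (x * t) = t.
Proof. by move=> h t; rewrite mulgA -{2}(expg1 x) -expgS h mul1g. Qed.
Lemma braid (x y : gT) : x ^+ 2 = 1 -> y ^+ 2 = 1 -> (x * y) ^+ 3 = 1 ->
  forall t, x * (y * (x * t)) = y * (x * (y * t)).
Proof.
move=> hx hy h t.
have e : (x * (y * x)) * (y * (x * y)) = 1 by rewrite -h !expgS expg0 mulg1 !mulgA.
have : (x * (y * x))^-1 = y * (x * y).
  by rewrite -[LHS]mulg1 -e mulgA mulVg mul1g.
by rewrite !invMg !sq_inv // !mulgA => ->.
Qed.

Let aa := sq_cancel Ha. Let bb := sq_cancel Hb. Let cc := sq_cancel Hc.
Let aba := braid Ha Hb Hab. Let aca := braid Ha Hc Hac. Let bcb := braid Hb Hc Hbc.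

Lemma uv_comm t : a * (b * (c * (b * (b * (a * (b * (c * t))))))) =
                  b * (a * (b * (c * (a * (b * (c * (b * t))))))).
Proof.
rewrite bb. rewrite -aba. rewrite bcb. rewrite aca. rewrite cc. done.
Qed.

Lemma va_id t : a*(b*(a*(b*(c*(a*t))))) = b*(a*(b*(c*(b*(c*(b*(a*t))))))).
Proof. by rewrite aba bb bcb cc bb. Qed.
Lemma uc_id t : c*(a*(b*(c*(b*(c*t))))) = a*(b*(c*(b*(c*(b*(a*(b*t))))))).
Proof. by rewrite bcb cc -aca bcb cc bb. Qed.
Lemma a_id t : a*t = a*(b*(c*(b*(b*(c*(b*t)))))).
Proof. by rewrite bb cc bb. Qed.
Lemma bc_id t : b*(b*(c*(b*t))) = c*(b*t).
Proof. by rewrite bb. Qed.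

Let ai := sq_inv Ha. Let bi := sq_inv Hb. Let ci := sq_inv Hc.
Definition tu := a * b * c * b.
Definition tv := b * tu * b.
Definition tT := <<[set tu; tv]>>.

Lemma tuv : commute tu tv.
Proof.
rewrite /commute /tv /tu -[_ * _]mulg1 -[RHS]mulg1 -!mulgA.
by rewrite bb uv_comm.
Qed.

Lemma abT : abelian tT.
Proof.
rewrite abelian_gen; apply/centsP => x + y; rewrite !inE => /orP[] /eqP -> /orP[] /eqP ->;
 by [|apply: tuv| apply/commute_sym; apply: tuv].
Qed.

Lemma normT g : tu ^ g \in tT -> tv ^ g \in tT -> g \in 'N(tT).
Proof.
move=> h1 h2; rewrite inE -genJ gen_subG; apply/subsetP => y /imsetP [z].
by rewrite !inE => /orP[] /eqP -> ->.
Qed.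

Lemma inT1 : tu \in tT. Proof. by rewrite mem_gen // !inE eqxx. Qed.
Lemma inT2 : tv \in tT. Proof. by rewrite mem_gen // !inE eqxx orbT. Qed.

Lemma bN : b \in 'N(tT).
Proof.
apply: normT.
  rewrite conjgE bi mulgA; exact: inT2.
rewrite conjgE bi /tv -[_ * _]mulg1 -!mulgA bb bb /tu !mulgA mulg1; exact: inT1.
Qed.

Lemma cN : c \in 'N(tT).
Proof.
apply: normT.
  have -> : tu ^ c = tu * tv^-1.
    rewrite conjgE ci /tv /tu !invMg bi ai ci -[_ * _]mulg1 -[RHS]mulg1 -!mulgA.
    by rewrite bb uc_id.
  by rewrite groupM ?groupV ?inT1 ?inT2.
have -> : tv ^ c = tv^-1.
  rewrite conjgE ci /tv /tu !invMg bi ai ci -[_ * _]mulg1 -[RHS]mulg1 -!mulgA.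
  by rewrite bb bb cc.
by rewrite groupV inT2.
Qed.

Lemma cardT_le : (#|tT| <= #[tu] * #[tv])%N.
Proof.
have sub : tT \subset <[tu]> <*> <[tv]>.
  rewrite gen_subG; apply/subsetP => x; rewrite !inE => /orP[] /eqP ->.
    by rewrite mem_gen // inE cycle_id.
  by rewrite mem_gen // inE cycle_id orbT.
rewrite (cent_joinEr (cents_cycle (commute_sym tuv))) in sub.
apply: leq_trans (subset_leq_card sub) _.
rewrite /order mul_cardG; apply: leq_pmulr; exact: cardG_gt0.
Qed.

Lemma cardG_le : (#|<<[set a; b; c]>>| <= 6 * #|tT|)%N.
Proof.
set D := (<[b * c]> <*> <[b]>)%G.
have bNbc : b \in 'N(<[b * c]>).
  rewrite inE -cycleJ cycle_subG.
  have -> : (b * c) ^ b = (b * c)^-1.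
    by rewrite conjgE bi invMg bi ci -!mulgA bb.
  by rewrite groupV cycle_id.
have cD : (#|D| <= 6)%N.
  rewrite /D /= norm_joinEr ?cycle_subG //.
  have h := mul_cardG <[b * c]> <[b]>.
  have o1 : (#[b * c] <= 3)%N by apply: dvdn_leq => //; rewrite order_dvdn Hbc.
  have o2 : (#[b] <= 2)%N by apply: dvdn_leq => //; rewrite order_dvdn Hb.
  apply: (@leq_trans (#[b * c] * #[b])); last exact: (leq_mul o1 o2).
  rewrite /order h; apply: leq_pmulr; exact: cardG_gt0.
have DN : D \subset 'N(tT).
  by rewrite /D /= join_subG !cycle_subG groupM ?bN ?cN.
have sub : <<[set a; b; c]>> \subset tT <*> D.
  have inTD : {subset tT <= tT <*> D} := subsetP (joing_subl _ _).
  have inDD : {subset D <= tT <*> D} := subsetP (joing_subr _ _).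
  have bD : b \in D := subsetP (joing_subr _ _) _ (cycle_id b).
  have bcD : b * c \in D := subsetP (joing_subl _ _) _ (cycle_id (b * c)).
  have cD' : c \in D.
 rewrite -(bb c); exact: groupM.
  rewrite gen_subG; apply/subsetP => x; rewrite !inE => /orP[/orP[]|] /eqP ->.
  - have -> : a = tu * (b * c * b).
      by rewrite -[LHS]mulg1 a_id /tu !mulgA mulg1.
    by apply: groupM; [apply: inTD; exact: inT1 | apply: inDD; exact: groupM].
  - exact: inDD.
  - exact: inDD.
rewrite norm_joinEr // in sub.
apply: leq_trans (subset_leq_card sub) _.
have h := mul_cardG tT D.
apply: (@leq_trans (#|tT| * #|D|)); last by rewrite mulnC leq_mul2r cD orbT.
rewrite h; apply: leq_pmulr; exact: cardG_gt0.
Qed.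
End Abs.
Arguments tu {gT}.
Arguments tv {gT}.
Arguments tT {gT}.
Section Model.
Variable m : nat.
Local Notation R := 'Z_(m.+2).
Local Notation Pt := (R * R * R)%type.

Definition fa (p : Pt) : Pt := let: (x, y, z) := p in ((z + 1)%R, y, (x - 1)%R).
Definition fb (p : Pt) : Pt := let: (x, y, z) := p in (y, x, z).
Definition fc (p : Pt) : Pt := let: (x, y, z) := p in (x, z, y).
Lemma faK : involutive fa. Proof. by case=> [[x y] z] /=; congr (_,_,_); ring. Qed.
Lemma fbK : involutive fb. Proof. by case=> [[x y] z]. Qed.
Lemma fcK : involutive fc. Proof. by case=> [[x y] z]. Qed.
Definition pa := perm (inv_inj faK).
Definition pb := perm (inv_inj fbK).
Definition pc := perm (inv_inj fcK).

Definition ftr (w : Pt) (p : Pt) : Pt :=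
  let: (x, y, z) := p in let: (a, b, c) := w in ((x + a)%R, (y + b)%R, (z + c)%R).
Lemma ftr_inj w : injective (ftr w).
Proof.
apply: (@can_inj _ _ _ (ftr (let: (a,b,c) := w in ((-a)%R,(-b)%R,(-c)%R)))).
by case: w => [[a b] c] [[x y] z] /=; congr (_,_,_); ring.
Qed.
Definition tr w := perm (@ftr_inj w).

Lemma trE w p : tr w p = ftr w p. Proof. by rewrite permE. Qed.

Lemma trX w n p : (tr w ^+ n) p =
  let: (x, y, z) := p in let: (a, b, c) := w in ((x + a *+ n)%R, (y + b *+ n)%R, (z + c *+ n)%R).
Proof.
case: w => [[a b] c]; elim: n p => [|n IH] [[x y] z].
  by rewrite expg0 perm1 /= !mulr0n !addr0.
rewrite expgS permM IH trE /= !mulrS; congr (_,_,_); ring.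
Qed.

Definition pu := pa * pb * pc * pb.
Lemma puE : pu = tr ((-1)%R, 0%R, 1%R).
Proof.
apply/permP => [[[x y] z]]; rewrite !permM !permE /=; congr (_,_,_); ring.
Qed.

Lemma rels1 : [/\ pa ^+ 2 = 1, pb ^+ 2 = 1 & pc ^+ 2 = 1].
Proof.
split; apply/permP => [[[x y] z]]; rewrite !expgS expg0 mulg1 !permM !permE /= ?perm1; congr (_,_,_); ring.
Qed.
Lemma rels2 : [/\ (pa * pb) ^+ 3 = 1, (pa * pc) ^+ 3 = 1 & (pb * pc) ^+ 3 = 1].
Proof.
split; apply/permP => [[[x y] z]]; rewrite !expgS expg0 mulg1 !permM !permE /= ?perm1; congr (_,_,_); ring.
Qed.
Lemma rels3 : pu ^+ m.+2 = 1.
Proof.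
apply/permP => [[[x y] z]]; rewrite puE trX perm1 /=.
have h : ((m.+2)%:R%R : R) = 0%R by rewrite pchar_Zp.
have h0 (w : R) : (w *+ m.+2 = 0)%R by rewrite -mulr_natr h mulr0.
by rewrite !h0 !addr0.
Qed.
End Model.
Section M2.
Variable m : nat.
Definition Hm := (<[pa m]> <*> <[pb m]> <*> <[pc m]>)%G.
Lemma homH : Hm \homg Grp (x0 : x1 : x2 :
    (x0 ^+ 2 = 1, x1 ^+ 2 = 1, x2 ^+ 2 = 1,
     (x0 * x1) ^+ 3 = 1, (x0 * x2) ^+ 3 = 1, (x1 * x2) ^+ 3 = 1,
     (x0 * x1 * x2 * x1) ^+ m.+2 = 1)).
Proof.
apply/existsP; exists ((pa m, pb m), pc m) => /=.
have [h1 h2 h3] := rels1 m; have [h4 h5 h6] := rels2 m; have h7 := rels3 m.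
rewrite /pu in h7.
rewrite h1 h2 h3 h4 h5 h6 h7 !eqxx.
done.
Qed.
End M2.
Section M3.
Variable m : nat.
Local Notation R := 'Z_(m.+2).
Definition o : (R*R*R)%type := (0%R,0%R,0%R).
Definition pv := pb m * pu m * pb m.
Lemma pvE : pv = tr ((0:R)%R, (-1)%R, 1%R).
Proof.
rewrite /pv puE; apply/permP => [[[x y] z]]; rewrite !permM !permE /=; congr (_,_,_); ring.
Qed.

Lemma inHa : pa m \in Hm m.
Proof. exact: (subsetP (joing_subl _ _) _ (subsetP (joing_subl _ _) _ (cycle_id _))). Qed.
Lemma inHb : pb m \in Hm m.
Proof. exact: (subsetP (joing_subl _ _) _ (subsetP (joing_subr _ _) _ (cycle_id _))). Qed.
Lemma inHc : pc m \in Hm m.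
Proof. exact: (subsetP (joing_subr _ _) _ (cycle_id _)). Qed.

Lemma orbit_big : (m.+2 * m.+2 <= #|orbit 'P (Hm m) o|)%N.
Proof.
pose F (ij : 'I_m.+2 * 'I_m.+2) := ((pu m ^+ ij.1 * pv ^+ ij.2) : {perm _}) o.
have Finj : injective F.
  move=> [i j] [i' j']; rewrite /F /= !permM puE pvE !trX /= => h.
  have h1 := congr1 (fun p : R * R * R => p.1.1) h.
  have h2 := congr1 (fun p : R * R * R => p.1.2) h.
  simpl in h1, h2.
  rewrite !mul0rn !addr0 !add0r !mulNrn in h1 h2.
  have e1 : (i%:R%R : R) = (i'%:R)%R by apply: oppr_inj.
  have e2 : (j%:R%R : R) = (j'%:R)%R by apply: oppr_inj.
  move: e1 e2 => /(congr1 val) /= e1 /(congr1 val) /= e2.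
  rewrite !val_Zp_nat // !modn_small // in e1 e2.
  by congr (_,_); apply: val_inj.
have -> : (m.+2 * m.+2 = #|F @: [set: 'I_m.+2 * 'I_m.+2]|)%N.
  by rewrite (card_imset _ Finj) cardsT card_prod card_ord.
apply: subset_leq_card; apply/subsetP => _ /imsetP[[i j] _ ->].
rewrite /F; apply: mem_orbit.
by rewrite groupM // groupX // ?groupM ?inHa ?inHb ?inHc.
Qed.
End M3.
Section M4.
Variable m : nat.
Local Notation R := 'Z_(m.+2).
Lemma stab_big : (6 <= #|'C_(Hm m)[o m | 'P]|)%N.
Proof.
set C := 'C_(Hm m)[o m | 'P].
have fix_b : pb m \in C.
  by rewrite inE inHb; apply/astab1P; rewrite /= /aperm /pb permE.
have fix_c : pc m \in C.
  by rewrite inE inHc; apply/astab1P; rewrite /= /aperm /pc permE.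
have e1 : (1%R : R) != 0%R by rewrite oner_eq0.
have ob : #[pb m] = 2.
  have : #[pb m] %| 2 by rewrite order_dvdn; have [_ -> _] := rels1 m.
  have : #[pb m] != 1%N.
    rewrite order_eq1; apply/eqP => /permP /(_ ((1%R, 0%R, 0%R) : (R * R * R)%type)); rewrite perm1 /pb permE /=.
    move=> h; have := congr1 (fun p : R * R * R => p.1.1) h; rewrite /= => /eqP.
    by rewrite eq_sym (negbTE e1).
  by case: #[pb m] => [|[|[|]]].
have obc : #[pb m * pc m] = 3.
  have : #[pb m * pc m] %| 3 by rewrite order_dvdn; have [_ _ ->] := rels2 m.
  have : #[pb m * pc m] != 1%N.
    rewrite order_eq1; apply/eqP => /permP /(_ ((1%R, 0%R, 0%R) : (R * R * R)%type)); rewrite perm1 permM /pb /pc !permE /=.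
    move=> h; have := congr1 (fun p : R * R * R => p.1.1) h; rewrite /= => /eqP.
    by rewrite eq_sym (negbTE e1).
  by case: #[pb m * pc m] => [|[|[|[|]]]].
have d2 : 2 %| #|C| by rewrite -ob order_dvdG.
have d3 : 3 %| #|C| by rewrite -obc order_dvdG // groupM.
have d6 : 6 %| #|C| by rewrite (@Gauss_dvd 2 3) // d2 d3.
by apply: dvdn_leq => //; rewrite cardG_gt0.
Qed.

Lemma Hm_big : (6 * (m.+2 * m.+2) <= #|Hm m|)%N.
Proof.
rewrite -(card_orbit_stab 'P (Hm m) (o m)) [X in (_ <= X)%N]mulnC; apply: leq_mul; [exact: stab_big | exact: orbit_big].
Qed.
End M4.

Theorem mainTheorem10 (s n k : nat) (r0 r1 r2 : {perm 'I_n}) :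
  2 <= s ->
  faithful_G_s0_action s r0 r1 r2 ->
  [transitive <<[set r0; r1; r2]>>, on [set: 'I_n] | 'P] ->
  #|orbit 'P (transl_T r0 r1 r2) @: [set: 'I_n]| = 3 ->
  (forall x : 'I_n, #|orbit 'P (transl_T r0 r1 r2) x| = k) ->
  exists2 d : nat, 0 < d /\ d %| s & k = (d * s)%N.
Proof.
move=> s2 [[h0 h1 h2] [h01 h02 h12] hu iso] _ horb hk.
case: s s2 hu iso => [|[|m]] // _ hu iso.
set s := m.+2.
have homG : Hm m \homg <<[set r0; r1; r2]>> by rewrite iso; exact: homH.
have cG1 := leq_homg homG.
have cG2 := Hm_big m.
have cG3 : (#|<<[set r0; r1; r2]>>| <= 6 * #|tT r0 r1 r2|)%N by apply: cardG_le.
have cT : (#|tT r0 r1 r2| <= #[tu r0 r1 r2] * #[tv r0 r1 r2])%N by apply: cardT_le.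
change (transl_T r0 r1 r2) with (tT r0 r1 r2) in horb, hk.
have hu' : tu r0 r1 r2 ^+ s = 1 := hu.
have hv' : tv r0 r1 r2 ^+ s = 1.
  have -> : tv r0 r1 r2 = tu r0 r1 r2 ^ r1 by rewrite conjgE (sq_inv h1) mulgA.
  by rewrite -conjXg hu' conj1g.
have ou : #[tu r0 r1 r2] %| s by rewrite order_dvdn hu'.
have ov : #[tv r0 r1 r2] %| s by rewrite order_dvdn hv'.
have ou' := dvdn_leq (isT : 0 < s) ou.
have ov' := dvdn_leq (isT : 0 < s) ov.
set T := tT r0 r1 r2 in horb hk cG3 cT.
set U := tu r0 r1 r2 in hu' ou ou' cT.
set V := tv r0 r1 r2 in hv' ov ov' cT.
have hT : (s * s <= #|T|)%N.
  rewrite -(leq_pmul2l (isT : 0 < 6)).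
  apply: leq_trans cG2 _; apply: leq_trans cG1 _; exact: cG3.
have hUV : (s * s <= #[U] * #[V])%N := leq_trans hT cT.
have hUs : (s * s <= #[U] * s)%N.
  apply: leq_trans hUV _; rewrite leq_mul2l ov' orbT //.
have eU : #[U] = s.
  apply/eqP; rewrite eqn_leq ou' /=; by rewrite leq_pmul2r in hUs.
have eT : #|T| = (s * s)%N.
  apply/eqP; rewrite eqn_leq hT andbT; apply: leq_trans cT _; rewrite eU leq_mul2l ov' orbT //.
have abT' : abelian T by apply: abT.
have uT : U \in T by apply: inT1.
have fixk y : (U ^+ k) y = y.
  set C := 'C_T[y | 'P].
  have sCT : C \subset T := subsetIl _ _.
  have nCT : T \subset 'N(C) := sub_abelian_norm abT' sCT.
  have uN : U \in 'N(C) := subsetP nCT _ uT.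
  have kE : #|T / C| = k by rewrite card_quotient // -card_orbit hk.
  have : coset C U \in T / C := mem_quotient C uT.
  move=> /order_dvdG; rewrite kE order_dvdn -morphX // => /eqP /coset_idr.
  move=> /(_ (groupX _ uN)) /setIP [_ /astab1P].
  by [].
have Uk : U ^+ k = 1 by apply/permP => y; rewrite perm1 fixk.
have sk : s %| k by rewrite -eU order_dvdn Uk.
have [x _] : exists x : 'I_n, true.
  have : (0 < #|orbit 'P T @: [set: 'I_n]|)%N by rewrite horb.
  by case/card_gt0P => O /imsetP [x _ _]; exists x.
have kT : k %| (s * s)%N by rewrite -eT -(hk x) card_orbit dvdn_indexg.
have k0 : (0 < k)%N by rewrite -(hk x) card_gt0; apply/set0Pn; exists x; exact: orbit_refl.
exists (k %/ s).
  split; first by rewrite divn_gt0 // dvdn_leq.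
  by rewrite -(dvdn_pmul2r (isT : 0 < s)) divnK.
by rewrite divnK.
Qed.
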